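(* Let $\mathcal{A}$ be an additive category and $\mathrm{Ex}(\mathcal{A})$ the set of all exact structures on $\mathcal{A}$, partially ordered by inclusion. Then $(\mathrm{Ex}(\mathcal{A}),\subseteq)$ is a lattice, with meet $\mathcal{E}\wedge\mathcal{E}'=\mathcal{E}\cap\mathcal{E}'$ and join $\mathcal{E}\vee\mathcal{E}'=\bigcap\{\mathcal{E}''\in\mathrm{Ex}(\mathcal{A}) : \mathcal{E}\subseteq\mathcal{E}'',\ \mathcal{E}'\subseteq\mathcal{E}''\}$.
   Context: An exact structure (in the sense of Quillen) on an additive category $\mathcal{A}$ is a class $\mathcal{E}$ of kernel–cokernel pairs $(i,d)$, closed under isomorphisms, such that: identities are admissible monics and admissible epics; admissible monics are closed under composition, and so are admissible epics; the pushout of an admissible monic along an arbitrary morphism exists and is an admissible monic; the pullback of an admissible epic along an arbitrary morphism exists and is an admissible epic. Here an admissible monic is a morphism $i$ with $(i,d)\in\mathcal{E}$ for some $d$, and an admissible epic dually. It is known (and may be used) that every additive category admits a unique maximal exact structure $\mathcal{E}_{max}$ (containing all exact structures) and a unique minimal one $\mathcal{E}_{min}$, consisting of the split exact sequences. *)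

(* Defs.v *)
Record AddCat := {
  Ob : Type;
  Hom : Ob -> Ob -> Type;
  comp : forall a b c : Ob, Hom b c -> Hom a b -> Hom a c;
  idm : forall a : Ob, Hom a a;
  addm : forall a b : Ob, Hom a b -> Hom a b -> Hom a b;
  zerom : forall a b : Ob, Hom a b;
  negm : forall a b : Ob, Hom a b -> Hom a b;
  comp_assoc : forall a b c d (h : Hom c d) (g : Hom b c) (f : Hom a b),
      comp a c d h (comp a b c g f) = comp a b d (comp b c d h g) f;
  comp_id_l : forall a b (f : Hom a b), comp a b b (idm b) f = f;
  comp_id_r : forall a b (f : Hom a b), comp a a b f (idm a) = f;
  add_assoc : forall a b (f g h : Hom a b), addm a b f (addm a b g h) = addm a b (addm a b f g) h;
  add_comm : forall a b (f g : Hom a b), addm a b f g = addm a b g f;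
  add_zero : forall a b (f : Hom a b), addm a b f (zerom a b) = f;
  add_neg : forall a b (f : Hom a b), addm a b f (negm a b f) = zerom a b;
  comp_add_l : forall a b c (g g' : Hom b c) (f : Hom a b),
      comp a b c (addm b c g g') f = addm a c (comp a b c g f) (comp a b c g' f);
  comp_add_r : forall a b c (g : Hom b c) (f f' : Hom a b),
      comp a b c g (addm a b f f') = addm a c (comp a b c g f) (comp a b c g f');
  zero_obj : exists z : Ob, (forall a (f : Hom z a), f = zerom z a) /\
                            (forall a (f : Hom a z), f = zerom a z);
  biproducts : forall a b : Ob, exists (c : Ob) (p1 : Hom c a) (p2 : Hom c b)
      (i1 : Hom a c) (i2 : Hom b c),
      comp a c a p1 i1 = idm a /\ comp b c b p2 i2 = idm b /\
      comp b c a p1 i2 = zerom b a /\ comp a c b p2 i1 = zerom a b /\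
      addm c c (comp c a c i1 p1) (comp c b c i2 p2) = idm c
}.

Arguments comp {a0} {a b c} _ _.
Arguments idm {a0} a.
Arguments addm {a0} {a b} _ _.
Arguments zerom {a0} a b.
Arguments negm {a0} {a b} _.

Section Exact.
Variable A : AddCat.

Definition is_iso {a b : Ob A} (f : Hom A a b) : Prop :=
  exists g : Hom A b a, comp g f = idm a /\ comp f g = idm b.

Definition is_kernel {a b c : Ob A} (i : Hom A a b) (d : Hom A b c) : Prop :=
  comp d i = zerom a c /\
  forall x (f : Hom A x b), comp d f = zerom x c ->
    exists g : Hom A x a, comp i g = f /\ forall g', comp i g' = f -> g' = g.

Definition is_cokernel {a b c : Ob A} (i : Hom A a b) (d : Hom A b c) : Prop :=
  comp d i = zerom a c /\
  forall x (f : Hom A b x), comp f i = zerom a x ->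
    exists g : Hom A c x, comp g d = f /\ forall g', comp g' d = f -> g' = g.

Definition kc_pair {a b c : Ob A} (i : Hom A a b) (d : Hom A b c) : Prop :=
  is_kernel i d /\ is_cokernel i d.

(* a class of (candidate) short sequences a --i--> b --d--> c *)
Definition seq_class : Type :=
  forall a b c : Ob A, Hom A a b -> Hom A b c -> Prop.

Definition subclass (E E' : seq_class) : Prop :=
  forall a b c (i : Hom A a b) (d : Hom A b c), E a b c i d -> E' a b c i d.

Definition adm_mono (E : seq_class) {a b : Ob A} (i : Hom A a b) : Prop :=
  exists (c : Ob A) (d : Hom A b c), E a b c i d.

Definition adm_epi (E : seq_class) {b c : Ob A} (d : Hom A b c) : Prop :=
  exists (a : Ob A) (i : Hom A a b), E a b c i d.

Definition is_pushout {a b a' b' : Ob A} (i : Hom A a b) (f : Hom A a a')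
    (i' : Hom A a' b') (f' : Hom A b b') : Prop :=
  comp f' i = comp i' f /\
  forall x (u : Hom A b x) (v : Hom A a' x), comp u i = comp v f ->
    exists h : Hom A b' x, (comp h f' = u /\ comp h i' = v) /\
      forall h', comp h' f' = u -> comp h' i' = v -> h' = h.

Definition is_pullback {b c b' c' : Ob A} (d : Hom A b c) (g : Hom A c' c)
    (d' : Hom A b' c') (g' : Hom A b' b) : Prop :=
  comp d g' = comp g d' /\
  forall x (u : Hom A x b) (v : Hom A x c'), comp d u = comp g v ->
    exists h : Hom A x b', (comp g' h = u /\ comp d' h = v) /\
      forall h', comp g' h' = u -> comp d' h' = v -> h' = h.

Definition exact_structure (E : seq_class) : Prop :=
  (forall a b c (i : Hom A a b) (d : Hom A b c), E a b c i d -> kc_pair i d) /\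
  (forall a b c a' b' c' (i : Hom A a b) (d : Hom A b c) (i' : Hom A a' b')
      (d' : Hom A b' c') (u : Hom A a a') (v : Hom A b b') (w : Hom A c c'),
      E a b c i d -> is_iso u -> is_iso v -> is_iso w ->
      comp i' u = comp v i -> comp d' v = comp w d -> E a' b' c' i' d') /\
  (forall a, adm_mono E (idm a)) /\
  (forall a, adm_epi E (idm a)) /\
  (forall a b c (f : Hom A a b) (g : Hom A b c),
      adm_mono E f -> adm_mono E g -> adm_mono E (comp g f)) /\
  (forall a b c (f : Hom A a b) (g : Hom A b c),
      adm_epi E f -> adm_epi E g -> adm_epi E (comp g f)) /\
  (forall a b a' (i : Hom A a b) (f : Hom A a a'), adm_mono E i ->
      exists (b' : Ob A) (i' : Hom A a' b') (f' : Hom A b b'),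
        is_pushout i f i' f' /\ adm_mono E i') /\
  (forall b c c' (d : Hom A b c) (g : Hom A c' c), adm_epi E d ->
      exists (b' : Ob A) (d' : Hom A b' c') (g' : Hom A b' b),
        is_pullback d g d' g' /\ adm_epi E d').

Definition ex_meet (E E' : seq_class) : seq_class :=
  fun a b c i d => E a b c i d /\ E' a b c i d.

Definition ex_join (E E' : seq_class) : seq_class :=
  fun a b c i d => forall E'' : seq_class, exact_structure E'' ->
    subclass E E'' -> subclass E' E'' -> E'' a b c i d.

End Exact.

Arguments exact_structure {A} E.
Arguments subclass {A} E E'.
Arguments ex_meet {A} E E' _ _ _ _ _.
Arguments ex_join {A} E E' _ _ _ _ _.

(* Main.v *)
Require Import Defs.
From Stdlib Require Import FunctionalExtensionality PropExtensionality.

Lemma iso_id (A : AddCat) (a : Ob A) : is_iso A (idm a).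
Proof. exists (idm a); split; apply comp_id_l. Qed.

Lemma coker_iso (A : AddCat) a b c c' (i : Hom A a b) (d : Hom A b c) (d' : Hom A b c') :
  is_cokernel A i d -> is_cokernel A i d' ->
  exists w : Hom A c c', is_iso A w /\ comp w d = d'.
Proof.
  intros [h0 H] [h0' H'].
  destruct (H _ d' h0') as [w [Hw _]].
  destruct (H' _ d h0) as [w' [Hw' _]].
  destruct (H _ d h0) as [g [_ Ug]].
  destruct (H' _ d' h0') as [g' [_ Ug']].
  assert (e1 : comp w' w = idm c).
  { transitivity g; [|symmetry]; apply Ug.
    - rewrite <- comp_assoc, Hw, Hw'; reflexivity.
    - apply comp_id_l. }
  assert (e2 : comp w w' = idm c').
  { transitivity g'; [|symmetry]; apply Ug'.
    - rewrite <- comp_assoc, Hw', Hw; reflexivity.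
    - apply comp_id_l. }
  exists w; split; [exists w'; split|]; assumption.
Qed.

Lemma ker_iso (A : AddCat) a a' b c (i : Hom A a b) (i' : Hom A a' b) (d : Hom A b c) :
  is_kernel A i d -> is_kernel A i' d ->
  exists u : Hom A a a', is_iso A u /\ comp i' u = i.
Proof.
  intros [h0 H] [h0' H'].
  destruct (H' _ i h0) as [u [Hu _]].
  destruct (H _ i' h0') as [u' [Hu' _]].
  destruct (H _ i h0) as [g [_ Ug]].
  destruct (H' _ i' h0') as [g' [_ Ug']].
  assert (e1 : comp u' u = idm a).
  { transitivity g; [|symmetry]; apply Ug.
    - rewrite comp_assoc, Hu', Hu; reflexivity.
    - apply comp_id_r. }
  assert (e2 : comp u u' = idm a').
  { transitivity g'; [|symmetry]; apply Ug'.
    - rewrite comp_assoc, Hu, Hu'; reflexivity.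
    - apply comp_id_r. }
  exists u; split; [exists u'; split|]; assumption.
Qed.

Lemma mono_transfer (A : AddCat) (F : seq_class A) (hF : exact_structure F)
  a b c c' (i : Hom A a b) (d : Hom A b c) (d' : Hom A b c') :
  F a b c i d -> is_cokernel A i d' -> F a b c' i d'.
Proof.
  destruct hF as [Hkc [Hiso _]]. intros Hd Hd'.
  destruct (Hkc _ _ _ _ _ Hd) as [_ Hcok].
  destruct (coker_iso A _ _ _ _ _ _ _ Hcok Hd') as [w [Hw e]].
  apply (Hiso a b c a b c' i d i d' (idm a) (idm b) w Hd (iso_id A a) (iso_id A b) Hw).
  - rewrite comp_id_l, comp_id_r; reflexivity.
  - rewrite comp_id_r; symmetry; exact e.
Qed.

Lemma epi_transfer (A : AddCat) (F : seq_class A) (hF : exact_structure F)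
  a a' b c (i : Hom A a b) (i' : Hom A a' b) (d : Hom A b c) :
  F a b c i d -> is_kernel A i' d -> F a' b c i' d.
Proof.
  destruct hF as [Hkc [Hiso _]]. intros Hd Hi'.
  destruct (Hkc _ _ _ _ _ Hd) as [Hker _].
  destruct (ker_iso A _ _ _ _ _ _ _ Hker Hi') as [u [Hu e]].
  apply (Hiso a b c a' b c i d i' d u (idm b) (idm c) Hd Hu (iso_id A b) (iso_id A c)).
  - rewrite comp_id_l; exact e.
  - rewrite comp_id_l, comp_id_r; reflexivity.
Qed.

Lemma po_unique (A : AddCat) a b a' b1 b2 (i : Hom A a b) (f : Hom A a a')
  (i1 : Hom A a' b1) (f1 : Hom A b b1) (i2 : Hom A a' b2) (f2 : Hom A b b2) :
  is_pushout A i f i1 f1 -> is_pushout A i f i2 f2 ->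
  exists h : Hom A b2 b1, is_iso A h /\ comp h i2 = i1 /\ comp h f2 = f1.
Proof.
  intros [c1 U1] [c2 U2].
  destruct (U2 _ f1 i1 c1) as [h [[h1 h2] _]].
  destruct (U1 _ f2 i2 c2) as [k [[k1 k2] _]].
  destruct (U2 _ f2 i2 c2) as [g [_ Ug]].
  destruct (U1 _ f1 i1 c1) as [g' [_ Ug']].
  assert (e1 : comp k h = idm b2).
  { transitivity g; [|symmetry]; apply Ug.
    - rewrite <- comp_assoc, h1, k1; reflexivity.
    - rewrite <- comp_assoc, h2, k2; reflexivity.
    - apply comp_id_l. - apply comp_id_l. }
  assert (e2 : comp h k = idm b1).
  { transitivity g'; [|symmetry]; apply Ug'.
    - rewrite <- comp_assoc, k1, h1; reflexivity.
    - rewrite <- comp_assoc, k2, h2; reflexivity.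
    - apply comp_id_l. - apply comp_id_l. }
  exists h; split; [exists k; split|split]; assumption.
Qed.

Lemma pb_unique (A : AddCat) b c c' b1 b2 (d : Hom A b c) (g : Hom A c' c)
  (d1 : Hom A b1 c') (g1 : Hom A b1 b) (d2 : Hom A b2 c') (g2 : Hom A b2 b) :
  is_pullback A d g d1 g1 -> is_pullback A d g d2 g2 ->
  exists h : Hom A b2 b1, is_iso A h /\ comp d1 h = d2 /\ comp g1 h = g2.
Proof.
  intros [c1 U1] [c2 U2].
  destruct (U1 _ g2 d2 c2) as [h [[h1 h2] _]].
  destruct (U2 _ g1 d1 c1) as [k [[k1 k2] _]].
  destruct (U2 _ g2 d2 c2) as [x [_ Ux]].
  destruct (U1 _ g1 d1 c1) as [x' [_ Ux']].
  assert (e1 : comp k h = idm b2).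
  { transitivity x; [|symmetry]; apply Ux.
    - rewrite comp_assoc, k1, h1; reflexivity.
    - rewrite comp_assoc, k2, h2; reflexivity.
    - apply comp_id_r. - apply comp_id_r. }
  assert (e2 : comp h k = idm b1).
  { transitivity x'; [|symmetry]; apply Ux'.
    - rewrite comp_assoc, h1, k1; reflexivity.
    - rewrite comp_assoc, h2, k2; reflexivity.
    - apply comp_id_r. - apply comp_id_r. }
  exists h; split; [exists k; split|split]; assumption.
Qed.

Definition inter (A : AddCat) (P : seq_class A -> Prop) : seq_class A :=
  fun a b c i d => forall F, P F -> F a b c i d.

Section Inter.
Context (A : AddCat) (P : seq_class A -> Prop) (E0 : seq_class A) (HP0 : P E0)
  (HPex : forall F, P F -> exact_structure F).

Lemma mono_iff a b (i : Hom A a b) :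
  (forall F, P F -> adm_mono A F i) -> adm_mono A (inter A P) i.
Proof.
  intros H. destruct (H E0 HP0) as [c0 [d0 Hd0]].
  destruct (HPex E0 HP0) as [Hkc _].
  destruct (Hkc _ _ _ _ _ Hd0) as [_ Hcok].
  exists c0, d0. intros F HF.
  destruct (H F HF) as [c1 [d1 Hd1]].
  exact (mono_transfer A F (HPex F HF) _ _ _ _ _ _ _ Hd1 Hcok).
Qed.

Lemma epi_iff b c (d : Hom A b c) :
  (forall F, P F -> adm_epi A F d) -> adm_epi A (inter A P) d.
Proof.
  intros H. destruct (H E0 HP0) as [a0 [i0 Hi0]].
  destruct (HPex E0 HP0) as [Hkc _].
  destruct (Hkc _ _ _ _ _ Hi0) as [Hker _].
  exists a0, i0. intros F HF.
  destruct (H F HF) as [a1 [i1 Hi1]].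
  exact (epi_transfer A F (HPex F HF) _ _ _ _ _ _ _ Hi1 Hker).
Qed.

Lemma mono_fwd a b (i : Hom A a b) :
  adm_mono A (inter A P) i -> forall F, P F -> adm_mono A F i.
Proof. intros [c [d H]] F HF. exists c, d. apply H, HF. Qed.

Lemma epi_fwd b c (d : Hom A b c) :
  adm_epi A (inter A P) d -> forall F, P F -> adm_epi A F d.
Proof. intros [a [i H]] F HF. exists a, i. apply H, HF. Qed.

Lemma inter_exact : exact_structure (inter A P).
Proof.
  split; [|split; [|split; [|split; [|split; [|split; [|split]]]]]].
  - intros a b c i d H. destruct (HPex E0 HP0) as [Hkc _]. apply Hkc, H, HP0.
  - intros a b c a' b' c' i d i' d' u v w H Hu Hv Hw e1 e2 F HF.
    destruct (HPex F HF) as [_ [Hiso _]].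
    exact (Hiso _ _ _ _ _ _ _ _ _ _ _ _ _ (H F HF) Hu Hv Hw e1 e2).
  - intros a. apply mono_iff. intros F HF. apply (HPex F HF).
  - intros a. apply epi_iff. intros F HF. apply (HPex F HF).
  - intros a b c f g Hf Hg. apply mono_iff. intros F HF.
    apply (HPex F HF); eapply mono_fwd; eauto.
  - intros a b c f g Hf Hg. apply epi_iff. intros F HF.
    apply (HPex F HF); eapply epi_fwd; eauto.
  - intros a b a' i f Hi.
    destruct (HPex E0 HP0) as [_ [_ [_ [_ [_ [_ [Hpo _]]]]]]].
    destruct (Hpo _ _ _ i f (mono_fwd _ _ _ Hi E0 HP0)) as [b' [i' [f' [Po _]]]].
    exists b', i', f'. split; [exact Po|]. apply mono_iff. intros F HF.
    destruct (HPex F HF) as [_ [Hiso [_ [_ [_ [_ [HpoF _]]]]]]].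
    destruct (HpoF _ _ _ i f (mono_fwd _ _ _ Hi F HF)) as [b'' [i'' [f'' [Po'' [c'' [d'' Hd'']]]]]].
    destruct (po_unique A _ _ _ _ _ _ _ _ _ _ _ Po Po'') as [h [[k [kh hk]] [e1 e2]]].
    exists c'', (comp d'' k).
    apply (Hiso _ _ _ _ _ _ _ _ _ _ (idm a') h (idm c'') Hd'' (iso_id A a') (ex_intro _ k (conj kh hk)) (iso_id A c'')).
    + rewrite comp_id_r; symmetry; exact e1.
    + rewrite <- comp_assoc, kh, comp_id_r, comp_id_l; reflexivity.
  - intros b c c' d g Hd.
    destruct (HPex E0 HP0) as [_ [_ [_ [_ [_ [_ [_ Hpb]]]]]]].
    destruct (Hpb _ _ _ d g (epi_fwd _ _ _ Hd E0 HP0)) as [b' [d' [g' [Pb _]]]].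
    exists b', d', g'. split; [exact Pb|]. apply epi_iff. intros F HF.
    destruct (HPex F HF) as [_ [Hiso [_ [_ [_ [_ [_ HpbF]]]]]]].
    destruct (HpbF _ _ _ d g (epi_fwd _ _ _ Hd F HF)) as [b'' [d'' [g'' [Pb'' [a'' [i'' Hi'']]]]]].
    destruct (pb_unique A _ _ _ _ _ _ _ _ _ _ _ Pb Pb'') as [h [Hh [e1 e2]]].
    exists a'', (comp h i'').
    apply (Hiso _ _ _ _ _ _ _ _ _ _ (idm a'') h (idm c') Hi'' (iso_id A a'') Hh (iso_id A c')).
    + rewrite comp_id_r; reflexivity.
    + rewrite comp_id_l; exact e1.
Qed.

End Inter.

Lemma seq_class_ext (A : AddCat) (E1 E2 : seq_class A) :
  (forall a b c i d, E1 a b c i d <-> E2 a b c i d) -> E1 = E2.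
Proof.
  intros H. apply functional_extensionality_dep; intro a.
  apply functional_extensionality_dep; intro b.
  apply functional_extensionality_dep; intro c.
  apply functional_extensionality_dep; intro i.
  apply functional_extensionality_dep; intro d.
  apply propositional_extensionality, H.
Qed.

Theorem theorem5p3 (A : AddCat)
  (Emax_exists : exists Emax : seq_class A, exact_structure Emax /\
      forall E : seq_class A, exact_structure E -> subclass E Emax)
  (E E' : seq_class A) (hE : exact_structure E) (hE' : exact_structure E') :
  (exact_structure (ex_meet E E') /\
   subclass (ex_meet E E') E /\ subclass (ex_meet E E') E' /\
   (forall F : seq_class A, exact_structure F ->
      subclass F E -> subclass F E' -> subclass F (ex_meet E E'))) /\
  (exact_structure (ex_join E E') /\
   subclass E (ex_join E E') /\ subclass E' (ex_join E E') /\
   (forall F : seq_class A, exact_structure F ->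
      subclass E F -> subclass E' F -> subclass (ex_join E E') F)).
Proof.
  split.
  - split; [|split; [|split]].
    + assert (Heq : ex_meet E E' = inter A (fun F => F = E \/ F = E')).
      { apply seq_class_ext. intros a b c i d; split.
        - intros [H1 H2] F [->| ->]; assumption.
        - intros H; split; apply H; auto. }
      rewrite Heq. apply (inter_exact A _ E); [left; reflexivity|].
      intros F [->| ->]; assumption.
    + intros a b c i d [H _]; exact H.
    + intros a b c i d [_ H]; exact H.
    + intros F _ H1 H2 a b c i d H; split; auto.
  - split; [|split; [|split]].
    + assert (Heq : ex_join E E' = inter A (fun F => exact_structure F /\ subclass E F /\ subclass E' F)).
      { apply seq_class_ext. intros a b c i d; split.
        - intros H F (H1 & H2 & H3). apply H; auto.
        - intros H F H1 H2 H3. apply H. auto. }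
      rewrite Heq. destruct Emax_exists as [Emax [HEm Hmax]].
      apply (inter_exact A _ Emax); [split; [|split]; auto|].
      intros F [HF _]; exact HF.
    + intros a b c i d H F _ H1 _. apply H1, H.
    + intros a b c i d H F _ _ H1. apply H1, H.
    + intros F HF H1 H2 a b c i d H. apply H; auto.
Qed.
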